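(* Let $\lambda=(\lambda_1,\dots,\lambda_d)$ be a partition of $n\ge2$ such that $\gcd(n-1,\lambda_t)=1$ for every $t$. Then for distinct $i,j\in\{1,\dots,n-2\}$, we have $i\preceq j$ in $P(\lambda)$ if and only if $i<j$ and $s_{t,i}>s_{t,j}>0$ for every $t\in\{1,\dots,d\}$.
   Context: $\Delta_\lambda=\mathrm{conv}(e_1,\dots,e_d,\lambda)\subset\mathbb{R}^d$, with fundamental parallelepiped $\Pi_\lambda=\{\sum_{i=1}^d\gamma_i(1,e_i)+\gamma_{d+1}(1,\lambda):0\le\gamma_i<1\}\subset\mathbb{R}^{d+1}$. $P(\lambda)$ is $\Pi_\lambda\cap\mathbb{Z}^{d+1}$ ordered by $\sigma\preceq\mu$ iff $\mu-\sigma\in\Pi_\lambda\cap\mathbb{Z}^{d+1}$. For $0\le b<n-1$ set $p(b)=\left(\sum_{t}\lceil b\lambda_t/(n-1)\rceil-b,\ \lceil b\lambda_1/(n-1)\rceil,\dots,\lceil b\lambda_d/(n-1)\rceil\right)$; $b\mapsto p(b)$ is a bijection from $\{0,\dots,n-2\}$ onto $\Pi_\lambda\cap\mathbb{Z}^{d+1}$ and each integer $b$ is identified with $p(b)$. For $0\le i<n-1$ and $1\le t\le d$, the integers $r_{t,i}\ge0$ and $0\le s_{t,i}<n-1$ are defined by $i\lambda_t=r_{t,i}(n-1)+s_{t,i}$. *)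

(* Defs.v *)
From Stdlib Require Import Rdefinitions.
From HB Require Import structures.
From mathcomp Require Import all_boot all_order all_algebra.
From mathcomp Require Import Rstruct.
Set Implicit Arguments. Unset Strict Implicit. Unset Printing Implicit Defensive.
Import Order.TTheory GRing.Theory Num.Theory.

Definition is_partition (n : nat) (lam : seq nat) : Prop :=
  [/\ sorted geq lam, all (fun x => 0 < x) lam & sumn lam = n].

Definition ceil_div (a m : nat) : nat := (a + m.-1) %/ m.

(* p(b) as a function of the coordinate index k in {0,...,d}:
   coordinate 0 is  sum_t ceil(b lam_t/(n-1)) - b,
   coordinate t (1 <= t <= d) is ceil(b lam_t/(n-1)). *)
Definition pcoord (lam : seq nat) (n b k : nat) : int :=
  if k == 0%N then
    (Posz (\sum_(t <- lam) ceil_div (b * t) n.-1) - Posz b)%R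
  else Posz (ceil_div (b * nth 0%N lam k.-1) n.-1).

(* v (a vector of Z^{d+1}, coordinates indexed 0..d) lies in the
   fundamental parallelepiped Pi_lam: v = sum_{i=1}^d g_i (1,e_i) + g_{d+1} (1,lam)
   with real 0 <= g_i < 1.  Here g k (k < d) plays gamma_{k+1}, g d plays gamma_{d+1}. *)
Definition inPi (lam : seq nat) (v : nat -> int) : Prop :=
  exists g : nat -> R,
    [/\ (forall k, (k <= size lam)%N -> (0 <= g k)%R /\ (g k < 1)%R),
        ((v 0%N)%:~R = \sum_(k < (size lam).+1) g k)%R
      & forall t, (t < size lam)%N ->
          ((v t.+1)%:~R = g t + g (size lam) * (nth 0%N lam t)%:R)%R].

Definition preceq (lam : seq nat) (n i j : nat) : Prop :=
  inPi lam (fun k => (pcoord lam n j k - pcoord lam n i k)%R).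

(* s_{t,i}: i * lam_t = r_{t,i} (n-1) + s_{t,i}, 0 <= s < n-1; t is 0-based here *)
Definition s_coef (lam : seq nat) (n t i : nat) : nat := (i * nth 0%N lam t) %% n.-1.

(* Main.v *)
Require Import Defs.
From mathcomp Require Import all_boot all_order all_algebra.
From Stdlib Require Import Rdefinitions.
From mathcomp Require Import Rstruct ring lra zify.
Import Order.TTheory GRing.Theory Num.Theory.

Lemma ceil_eq a m : (0 < m)%N -> (0 < a %% m)%N -> (m * ceil_div a m + a %% m = a + m)%N.
Proof. move=> hm ha. rewrite /ceil_div.
have hr : (a %% m < m)%N by rewrite ltn_mod.
have ea := divn_eq a m.
move: ea ha hr; set q := a %/ m; set r := a %% m => ea ha hr.
have -> : ((a + m.-1) %/ m = q.+1)%N.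
  rewrite (_ : a + m.-1 = q.+1 * m + r.-1)%N; last by lia.
  rewrite divnMDl // divn_small //; lia.
lia. Qed.

Lemma s_pos m L b : coprime m L -> (0 < b < m)%N -> (0 < (b * L) %% m)%N.
Proof. move=> hc /andP[hb hbm]. rewrite lt0n; apply/negP => /eqP h.
have : (m %| b * L)%N by apply/dvdnP; exists ((b*L) %/ m); rewrite {1}(divn_eq (b*L) m) h addn0.
rewrite Gauss_dvdl // => /dvdn_leq => /(_ hb). lia. Qed.

Lemma s_neq m L i j : coprime m L -> (i < j < m)%N -> (i * L) %% m <> (j * L) %% m.
Proof. move=> hc /andP[hij hjm] h.
have : (m %| j * L - i * L)%N.
  rewrite -eqn_mod_dvd; first by apply/eqP.
  by rewrite leq_mul2r ltnW ?orbT.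
rewrite -mulnBl Gauss_dvdl // => /dvdn_leq. move=> H. have := H ltac:(lia). lia. Qed.

Theorem corollary2p18 (lam : seq nat) (n : nat) :
  (2 <= n)%N -> is_partition n lam ->
  (forall t, (t < size lam)%N -> coprime n.-1 (nth 0%N lam t)) ->
  forall i j : nat, (1 <= i <= n - 2)%N -> (1 <= j <= n - 2)%N -> i <> j ->
  (preceq lam n i j <->
     (i < j)%N /\
     (forall t, (t < size lam)%N ->
        (s_coef lam n t j < s_coef lam n t i)%N /\ (0 < s_coef lam n t j)%N)).
Proof.
Local Open Scope ring_scope.
move=> hn [_ hpos hsum] hcop i j /andP[hi1 hi2] /andP[hj1 hj2] hij.
set m := n.-1.
have hm0 : (0 < m)%nat by rewrite /m; lia.
set d := size lam.
set L := fun t => nth 0%nat lam t.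
have hsp : forall b t, (t < d)%nat -> (1 <= b <= n - 2)%nat -> (0 < s_coef lam n t b)%nat.
  move=> b t ht hb; apply: s_pos; first exact: hcop.
  rewrite /m; lia.
have hC : forall b t, (t < d)%nat -> (1 <= b <= n - 2)%nat ->
    (m * ceil_div (b * L t) m + s_coef lam n t b = b * L t + m)%nat.
  move=> b t ht hb; apply: ceil_eq => //; exact: hsp.
pose mR : R := m%:R.
have hmR : 0 < mR by rewrite ltr0n.
have hmR0 : mR != 0 by rewrite gt_eqF.
pose C b t : R := (ceil_div (b * L t) m)%:R.
pose S b t : R := (s_coef lam n t b)%:R.
pose gam := (j%:R - i%:R) / mR.
pose D t := (S i t - S j t) / mR.
have hdiff : forall t, (t < d)%nat -> C j t - C i t = D t + gam * (L t)%:R.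
  move=> t ht.
  have eC : forall b, (1 <= b <= n - 2)%nat -> C b t = (b%:R * (L t)%:R + mR - S b t) / mR.
    move=> b hb; have := hC b t ht hb => /(congr1 (fun x => x%:R : R)).
    rewrite !natrD !natrM -/mR => e.
    by rewrite -e addrK [mR * _]mulrC mulfK.
  rewrite (eC j) ?hj1 ?hj2 // (eC i) ?hi1 ?hi2 // /D /gam. by field.
have hLsum : \sum_(k < d) ((L k)%:R : R) = mR + 1.
  rewrite -natr_sum /L -(big_mkord xpredT (fun k => nth 0%nat lam k)) -(big_nth 0%nat xpredT id).
  rewrite -sumnE hsum /mR natr1 /m prednK //; lia.
have hkey : \sum_(k < d) (C j k - C i k) = \sum_(k < d) D k + gam * (mR + 1).
  rewrite -hLsum mulr_sumr -big_split /=; apply: eq_bigr => k _; exact: hdiff.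
have h0E : ((fun k => pcoord lam n j k - pcoord lam n i k) 0%nat)%:~R =
      (\sum_(k < d) (C j k - C i k)) - ((j%:R : R) - i%:R).
  have hs : forall b, \sum_(t <- lam) ((ceil_div (b * t) n.-1)%:R : R) = \sum_(k < d) C b k.
    by move=> b; rewrite (big_nth 0%nat) big_mkord.
  rewrite /= /pcoord /= !intrB sumrB -!pmulrn !natr_sum !hs.
  ring.
have htE : forall t, (t < d)%nat ->
    ((fun k => pcoord lam n j k - pcoord lam n i k) t.+1)%:~R = C j t - C i t.
  by move=> t ht; rewrite /= /pcoord /= intrB -!pmulrn.
have hgam : gam * mR = j%:R - i%:R by rewrite /gam mulfVK.
split.
- move=> [g [hg h0 ht]].
  rewrite h0E big_ord_recr /= in h0.
  have egt : forall t, (t < d)%nat -> g t = C j t - C i t - g d * (L t)%:R.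
    move=> t htd; rewrite -htE // ht //; ring.
  have hsg : \sum_(k < d) g (widen_ord (leqnSn d) k) =
       \sum_(k < d) (C j k - C i k) - g d * (mR + 1).
    rewrite -hLsum mulr_sumr -sumrB; apply: eq_bigr => k _ /=; exact: egt.
  rewrite hsg hkey in h0.
  have hgd : g d = gam.
    have : (g d - gam) * mR = 0 by move: h0; lra.
    by move/eqP; rewrite mulf_eq0 (negbTE hmR0) orbF subr_eq0 => /eqP.
  have hij' : (i < j)%nat.
    have h1 : 0 <= gam * mR.
      by apply: mulr_ge0; [rewrite -hgd; exact: (hg d (leqnn _)).1 | exact: ltW].
    rewrite hgam subr_ge0 ler_nat in h1; lia.
  split => // t htd.
  have hD : g t = D t by rewrite egt // hdiff // hgd; ring.
  have h1 : 0 <= D t * mR.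
    by apply: mulr_ge0; [rewrite -hD; exact: (hg t (ltnW htd)).1 | exact: ltW].
  rewrite /D mulfVK // subr_ge0 ler_nat in h1.
  have hne : s_coef lam n t i <> s_coef lam n t j.
    apply: s_neq; first exact: hcop.
    rewrite /m in hm0 *; lia.
  split; last by apply: hsp => //; rewrite hj1.
  by rewrite ltn_neqAle h1 andbT; apply/eqP => e; apply: hne.
- move=> [hlt hs].
  exists (fun k => if k == d then gam else D k); split.
  + move=> k hk; case: eqP => [_|hne].
    * have hjm : (j%:R : R) < mR by rewrite ltr_nat /m; lia.
      have hi0 : 0 <= (i%:R : R) by [].
      split; first by apply: divr_ge0; [rewrite subr_ge0 ler_nat ltnW | exact: ltW].
      rewrite /gam ltr_pdivrMr // mul1r; lra.
    * have hkd : (k < d)%nat by rewrite ltn_neqAle hk andbT; apply/eqP.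
      have hsm : S i k < mR by rewrite ltr_nat /S /s_coef ltn_mod.
      have hs0 : 0 <= S j k by rewrite /S.
      split; first by apply: divr_ge0; [rewrite subr_ge0 ler_nat ltnW // (hs k hkd).1 | exact: ltW].
      rewrite /D ltr_pdivrMr // mul1r; lra.
  + rewrite h0E big_ord_recr /= eqxx.
    rewrite [X in _ = X + _](eq_bigr (fun k : 'I_d => D k)); last by move=> k _ /=; rewrite ltn_eqF.
    rewrite hkey -hgam; ring.
  + by move=> t htd; rewrite htE // hdiff // eqxx (ltn_eqF htd).
Qed.
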